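(* There exists a constant $C_\xi>0$ depending only on $\xi$ such that for every $\beta>0$, $$\beta x_\beta(q)\le\frac{C_\xi}{\xi(1)-\xi(q)}\quad\text{for all }q\in[0,1).$$
   Context: For $N\ge1$ let $S_N=\{\sigma\in\mathbb R^N:\sum_i\sigma_i^2=N\}$, $m_N$ the uniform probability measure on $S_N$. Let $(\gamma_p)_{p\ge2}$ be real with $\sum_{p\ge2}2^p\gamma_p^2<\infty$, $h\in\mathbb R$, $\xi(s)=\sum_{p\ge2}\gamma_p^2s^p$; $X_N(\sigma)=\sum_{p\ge2}\gamma_pN^{-(p-1)/2}\sum_{i_1,\dots,i_p=1}^N g_{i_1,\dots,i_p}\sigma_{i_1}\cdots\sigma_{i_p}$ with i.i.d. standard Gaussians $g$, and $H_N(\sigma)=X_N(\sigma)+h\sum_i\sigma_i$. For $\beta>0$ let $\xi_\beta=\beta^2\xi$, $h_\beta=\beta h$, $\mathcal M$ the set of distribution functions $x$ on $[0,1]$ with $x(\hat q)=1$ for some $\hat q<1$, $\hat x(q)=\int_q^1x$, and $\mathcal Q_\beta(x)=\frac12\big(\int_0^1(\xi'_\beta(q)+h_\beta^2)x(q)dq+\int_0^{\hat q}\frac{dq}{\hat x(q)}+\log(1-\hat q)\big)$ (any $\hat q<1$ with $x(\hat q)=1$). It is known that $\lim_N\mathbb E\frac1N\log\int_{S_N}e^{\beta H_N}dm_N=\inf_{\mathcal M}\mathcal Q_\beta$ and that this infimum is attained at a unique $x_\beta\in\mathcal M$. *)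

(* Defs.v *)
From Stdlib Require Import Reals Lra.
From Coquelicot Require Import Coquelicot.
Open Scope R_scope.

Definition xi (gamma : nat -> R) (s : R) : R :=
  Series (fun p => if (2 <=? p)%nat then (gamma p)^2 * s^p else 0).

Definition xi_beta (gamma : nat -> R) (beta : R) (s : R) : R :=
  beta^2 * xi gamma s.

(* x is a distribution function on [0,1]: values in [0,1], nondecreasing,
   right-continuous on [0,1). Only the values on [0,1] matter. *)
Definition distr_fun01 (x : R -> R) : Prop :=
  (forall q, 0 <= q <= 1 -> 0 <= x q <= 1) /\
  (forall s t, 0 <= s -> s <= t -> t <= 1 -> x s <= x t) /\
  (forall q, 0 <= q < 1 -> forall eps, 0 < eps ->
     exists delta, 0 < delta /\
       forall t, q <= t < q + delta -> Rabs (x t - x q) < eps).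

Definition valid_qhat (x : R -> R) (qh : R) : Prop :=
  0 <= qh < 1 /\ x qh = 1.

Definition inM (x : R -> R) : Prop :=
  distr_fun01 x /\ exists qh, valid_qhat x qh.

Definition xhat (x : R -> R) (q : R) : R := RInt x q 1.

Definition Qbeta (gamma : nat -> R) (h beta : R) (x : R -> R) (qh : R) : R :=
  / 2 * ( RInt (fun q => (Derive (xi_beta gamma beta) q + (beta * h)^2) * x q) 0 1
        + RInt (fun q => / xhat x q) 0 qh
        + ln (1 - qh) ).

(* x is a minimizer of Q_beta over M (the Parisi measure x_beta, which is
   known to exist and be unique) *)
Definition is_minimizer (gamma : nat -> R) (h beta : R) (x : R -> R) : Prop :=
  inM x /\
  forall y, inM y ->
    forall qx qy, valid_qhat x qx -> valid_qhat y qy ->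
      Qbeta gamma h beta x qx <= Qbeta gamma h beta y qy.

(* Main.v *)
Require Import Defs.
From Stdlib Require Import Reals Lra Lia Classical.
From Coquelicot Require Import Coquelicot.
Open Scope R_scope.

Lemma ex_RInt_indic (f : R -> R) (c a b : R) :
  a <= b -> (forall s t, s <= t -> f s <= f t) ->
  ex_RInt (fun t => if Rle_dec c (f t) then 1 else 0) a b.
Proof.
  intros Hab Hf.
  destruct (classic (exists t, a <= t <= b /\ f t < c)) as [[t1 [Ht1 Hft1]]|Hn].
  - set (E := fun t => t <= b /\ f t < c).
    assert (HB : bound E) by (exists b; intros x [Hx _]; exact Hx).
    assert (HE : exists x, E x) by (exists t1; split; lra).
    destruct (completeness E HB HE) as [s [Hs1 Hs2]].
    assert (Hts : t1 <= s) by (apply Hs1; split; lra).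
    assert (Hsb : s <= b) by (apply Hs2; intros x [Hx _]; exact Hx).
    apply ex_RInt_Chasles with s.
    + apply ex_RInt_ext with (fun _ => 0).
      2: apply ex_RInt_const.
      intros t Ht. rewrite Rmin_left in Ht by lra. rewrite Rmax_right in Ht by lra.
      destruct (classic (exists e, E e /\ t < e)) as [[e [[_ He] Hte]]|Hne].
      * destruct (Rle_dec c (f t)) as [H|H]; [|reflexivity].
        exfalso. assert (f t <= f e) by (apply Hf; lra). lra.
      * exfalso. assert (s <= t). { apply Hs2. intros x Hx.
          destruct (Rle_dec x t) as [H|H]; [exact H|]. exfalso; apply Hne; exists x; split; [exact Hx|lra]. }
        lra.
    + apply ex_RInt_ext with (fun _ => 1).
      2: apply ex_RInt_const.
      intros t Ht. rewrite Rmin_left in Ht by lra. rewrite Rmax_right in Ht by lra.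
      destruct (Rle_dec c (f t)) as [H|H]; [reflexivity|].
      exfalso. assert (t <= s) by (apply Hs1; split; lra). lra.
  - apply ex_RInt_ext with (fun _ => 1).
    2: apply ex_RInt_const.
    intros t Ht. rewrite Rmin_left in Ht by lra. rewrite Rmax_right in Ht by lra.
    destruct (Rle_dec c (f t)) as [H|H]; [reflexivity|].
    exfalso; apply Hn; exists t; split; lra.
Qed.

Fixpoint stsum (g : R -> R) (c d : R) (K : nat) (t : R) : R :=
  match K with
  | O => 0
  | S k => stsum g c d k t + (if Rle_dec (c + INR (S k) * d) (g t) then 1 else 0)
  end.

Lemma stsum_int g c d K a b : a <= b -> (forall s t, s <= t -> g s <= g t) ->
  ex_RInt (stsum g c d K) a b.
Proof.
  intros Hab Hg. induction K as [|K IH].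
  - apply ex_RInt_ext with (fun _ => 0). 2: apply ex_RInt_const.
    intros; reflexivity.
  - apply ex_RInt_ext with (fun t => plus (stsum g c d K t)
       (if Rle_dec (c + INR (S K) * d) (g t) then 1 else 0)).
    + intros; reflexivity.
    + apply (ex_RInt_plus (V := R_NormedModule) (stsum g c d K) (fun t => if Rle_dec (c + INR (S K) * d) (g t) then 1 else 0)); [exact IH|]. apply ex_RInt_indic; assumption.
Qed.

Lemma stsum_bound g c d t : 0 < d -> c <= g t -> forall K,
  (c + INR K * d <= g t -> stsum g c d K t = INR K) /\
  (g t < c + INR K * d -> c + d * stsum g c d K t <= g t < c + d * (stsum g c d K t + 1)).
Proof.
  intros Hd Hc K. induction K as [|K [IH1 IH2]].
  - simpl. split; [reflexivity|]. intros; lra.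
  - assert (HS : INR (S K) = INR K + 1) by (rewrite S_INR; reflexivity).
    change (stsum g c d (S K) t) with (stsum g c d K t + (if Rle_dec (c + INR (S K) * d) (g t) then 1 else 0)). split.
    + intros H. rewrite IH1 by (rewrite HS in H; nra).
      destruct (Rle_dec (c + INR (S K) * d) (g t)) as [_|n]; [|contradiction].
      rewrite HS; ring.
    + intros H. destruct (Rle_dec (c + INR (S K) * d) (g t)) as [h|_]; [lra|].
      rewrite Rplus_0_r.
      destruct (Rle_dec (c + INR K * d) (g t)) as [h|h].
      * rewrite (IH1 h). rewrite HS in H. lra.
      * apply IH2; lra.
Qed.

Lemma ex_RInt_mono_glob (f : R -> R) (lo hi a b : R) : a <= b ->
  (forall s t, s <= t -> f s <= f t) -> (forall t, lo <= f t <= hi) ->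
  ex_RInt f a b.
Proof.
  intros Hab Hf Hb.
  destruct (INR_unbounded (hi - lo)) as [D HD].
  set (dn := fun n : nat => / INR (S n)).
  assert (Hdn : forall n, 0 < dn n) by (intros n; apply Rinv_0_lt_compat, lt_0_INR; lia).
  set (gn := fun (n : nat) t => lo + dn n * stsum f lo (dn n) (S n * D) t).
  assert (Hint : forall n, ex_RInt (gn n) a b).
  { intros n. unfold gn.
    apply ex_RInt_ext with (fun t => plus lo (scal (dn n) (stsum f lo (dn n) (S n * D) t))).
    - intros; reflexivity.
    - apply (ex_RInt_plus (V := R_NormedModule) (fun _ => lo) (fun t => scal (dn n) (stsum f lo (dn n) (S n * D) t))); [apply ex_RInt_const|]. apply (ex_RInt_scal (V := R_NormedModule)), stsum_int; assumption. }
  assert (Happ : forall n t, 0 <= f t - gn n t < dn n).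
  { intros n t. unfold gn.
    assert (HK : INR (S n * D) * dn n = INR D).
    { rewrite mult_INR. unfold dn; cbv beta. field. apply not_0_INR; lia. }
    destruct (stsum_bound f lo (dn n) t (Hdn n) (proj1 (Hb t)) (S n * D)) as [_ H2].
    destruct H2 as [H3 H4]. specialize (Hb t). nra. nra. }
  destruct (filterlim_RInt (V := R_CompleteNormedModule) gn a b eventually eventually_filter f
     (fun n => RInt (gn n) a b)) as [If [_ HI]].
  - intros n. apply RInt_correct, Hint.
  - apply filterlim_locally. intros eps.
    destruct (archimed_cor1 eps (cond_pos eps)) as [N [HN1 HN2]].
    exists N. intros n Hn t.
    unfold ball; simpl. unfold AbsRing_ball, abs, minus, plus, opp; simpl.
    specialize (Happ n t). rewrite Rabs_left1 by lra.
    assert (dn n <= / INR N).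
    { unfold dn. apply Rinv_le_contravar. apply lt_0_INR; lia. apply le_INR; lia. }
    lra.
  - exists If; exact HI.
Qed.

Lemma ex_RInt_mono (f : R -> R) (a b : R) : a <= b ->
  (forall s t, a <= s -> s <= t -> t <= b -> f s <= f t) -> ex_RInt f a b.
Proof.
  intros Hab Hf.
  set (cl := fun t => Rmax a (Rmin t b)).
  assert (Hcl : forall t, a <= cl t <= b).
  { intros t; unfold cl. split. apply Rmax_l. apply Rmax_lub; [lra| apply Rmin_r]. }
  apply ex_RInt_ext with (fun t => f (cl t)).
  - intros t Ht. rewrite Rmin_left in Ht by lra. rewrite Rmax_right in Ht by lra.
    unfold cl. rewrite Rmin_left by lra. rewrite Rmax_right by lra. reflexivity.
  - apply ex_RInt_mono_glob with (f a) (f b). exact Hab.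
    + intros s t Hst. apply Hf; try apply Hcl. unfold cl.
      apply Rle_max_compat_l. apply Rle_min_compat_r. exact Hst.
    + intros t. split; apply Hf; try apply Hcl; lra.
Qed.

Definition aco (gamma : nat -> R) (p : nat) : R :=
  if (2 <=? p)%nat then (gamma p)^2 else 0.

Definition xid (gamma : nat -> R) (s : R) : R := PSeries (PS_derive (aco gamma)) s.

Lemma Series_0 : Series (fun _ : nat => 0) = 0.
Proof.
  rewrite (Series_ext (fun _ : nat => 0) (fun n => 0 * (fun _ : nat => 1) n)) by (intros; ring).
  rewrite Series_scal_l. ring.
Qed.

Lemma aco_nonneg gamma p : 0 <= aco gamma p.
Proof. unfold aco. destruct (2 <=? p)%nat; [apply pow2_ge_0|lra]. Qed.

Lemma xi_PS gamma s : xi gamma s = PSeries (aco gamma) s.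
Proof.
  unfold xi, PSeries. apply Series_ext. intros n. unfold aco.
  destruct (2 <=? n)%nat; ring.
Qed.

Lemma radius_2 gamma : ex_series (fun p => 2 ^ p * (gamma p) ^ 2) ->
  Rbar_le 2 (CV_radius (aco gamma)).
Proof.
  intros H. unfold CV_radius. destruct (Lub_Rbar_correct (CV_disk (aco gamma))) as [Hub _].
  apply Hub. unfold CV_disk.
  apply (ex_series_le (V := R_CompleteNormedModule)) with (2:=H).
  intros n. change (norm (Rabs (aco gamma n * 2 ^ n))) with (Rabs (Rabs (aco gamma n * 2 ^ n))).
  rewrite Rabs_Rabsolu, Rabs_right.
  2: apply Rle_ge, Rmult_le_pos; [apply aco_nonneg| apply pow_le; lra].
  unfold aco. destruct (2 <=? n)%nat.
  - rewrite Rmult_comm; lra.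
  - rewrite Rmult_0_l. apply Rmult_le_pos; [apply pow_le; lra|apply pow2_ge_0].
Qed.

Lemma in_radius gamma s : ex_series (fun p => 2 ^ p * (gamma p) ^ 2) ->
  0 <= s <= 1 -> Rbar_lt (Rabs s) (CV_radius (aco gamma)).
Proof.
  intros H Hs. apply Rbar_lt_le_trans with 2.
  - simpl. rewrite Rabs_right by lra. lra.
  - apply radius_2, H.
Qed.

Lemma xi_derive gamma s : ex_series (fun p => 2 ^ p * (gamma p) ^ 2) ->
  0 <= s <= 1 -> is_derive (xi gamma) s (xid gamma s).
Proof.
  intros H Hs. apply is_derive_ext with (PSeries (aco gamma)).
  - intros t; symmetry; apply xi_PS.
  - apply is_derive_PSeries, in_radius; assumption.
Qed.

Lemma xid_cont gamma s : ex_series (fun p => 2 ^ p * (gamma p) ^ 2) ->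
  0 <= s <= 1 -> continuous (xid gamma) s.
Proof.
  intros H Hs. apply continuity_pt_filterlim. unfold xid. apply PSeries_continuity.
  rewrite CV_radius_derive. apply in_radius; assumption.
Qed.

Lemma xid_ex gamma t : ex_series (fun p => 2 ^ p * (gamma p) ^ 2) -> 0 <= t <= 1 ->
  ex_series (fun k => PS_derive (aco gamma) k * t ^ k).
Proof.
  intros H Ht. assert (E := ex_pseries_derive (aco gamma) t (in_radius gamma t H Ht)).
  unfold ex_pseries in E. revert E. apply ex_series_ext. intros n.
  rewrite pow_n_pow. unfold scal; simpl. unfold mult; simpl. ring.
Qed.

Lemma xid_mono gamma s t : ex_series (fun p => 2 ^ p * (gamma p) ^ 2) ->
  0 <= s -> s <= t -> t <= 1 -> 0 <= xid gamma s <= xid gamma t.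
Proof.
  intros H Hs Hst Ht. unfold xid, PSeries. split.
  - assert (Z : Series (fun _ : nat => 0) <= Series (fun k => PS_derive (aco gamma) k * s ^ k)).
    { apply Series_le. 2: apply xid_ex; auto; lra.
      intros n; split; [lra|]. apply Rmult_le_pos; [|apply pow_le; lra].
      unfold PS_derive. apply Rmult_le_pos; [apply pos_INR|apply aco_nonneg]. }
    rewrite Series_0 in Z; exact Z.
  - apply Series_le. 2: apply xid_ex; auto; lra.
    intros n. assert (0 <= PS_derive (aco gamma) n).
    { unfold PS_derive. apply Rmult_le_pos; [apply pos_INR|apply aco_nonneg]. }
    split. apply Rmult_le_pos; [lra|apply pow_le; lra].
    apply Rmult_le_compat_l; [lra|]. apply pow_incr; lra.
Qed.

Lemma xi_ftc gamma a b : ex_series (fun p => 2 ^ p * (gamma p) ^ 2) ->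
  0 <= a -> a <= b -> b <= 1 -> is_RInt (xid gamma) a b (xi gamma b - xi gamma a).
Proof.
  intros H Ha Hab Hb. apply (is_RInt_derive (V := R_CompleteNormedModule)).
  - intros x Hx. rewrite Rmin_left in Hx by lra. rewrite Rmax_right in Hx by lra.
    apply xi_derive; auto; lra.
  - intros x Hx. rewrite Rmin_left in Hx by lra. rewrite Rmax_right in Hx by lra.
    apply xid_cont; auto; lra.
Qed.

Lemma xi_lip gamma a b : ex_series (fun p => 2 ^ p * (gamma p) ^ 2) ->
  0 <= a -> a <= b -> b <= 1 -> xi gamma b - xi gamma a <= xid gamma 1 * (b - a).
Proof.
  intros H Ha Hab Hb.
  assert (I := xi_ftc gamma a b H Ha Hab Hb).
  rewrite <- (is_RInt_unique _ _ _ _ I).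
  apply Rle_trans with (RInt (fun _ => xid gamma 1) a b).
  - apply RInt_le; auto. exists (xi gamma b - xi gamma a); exact I.
    apply ex_RInt_const. intros x Hx. apply xid_mono; auto; lra.
  - rewrite RInt_const. unfold scal; simpl; unfold mult; simpl. lra.
Qed.

Lemma Series_ge_term (u : nat -> R) p : (forall n, 0 <= u n) -> ex_series u -> u p <= Series u.
Proof.
  intros Hu Hex. rewrite (Series_incr_n u (S p)) by (lia || exact Hex).
  simpl pred.
  assert (T : 0 <= Series (fun k => u (S p + k)%nat)).
  { assert (Z : Series (fun _ : nat => 0) <= Series (fun k => u (S p + k)%nat)).
    { apply Series_le. intros; split; [lra| apply Hu]. apply (ex_series_incr_n u (S p)), Hex. }
    rewrite Series_0 in Z; exact Z. }
  destruct p as [|p'].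
  - change (sum_f_R0 u 0) with (u 0%nat). lra.
  - rewrite tech5. assert (0 <= sum_f_R0 u p') by (apply cond_pos_sum; exact Hu). lra.
Qed.

Lemma xi_gap gamma q : ex_series (fun p => 2 ^ p * (gamma p) ^ 2) ->
  (exists p, (2 <= p)%nat /\ gamma p <> 0) -> 0 <= q < 1 -> 0 < xi gamma 1 - xi gamma q.
Proof.
  intros H [p0 [Hp0 Hg]] Hq.
  rewrite !xi_PS. unfold PSeries.
  assert (E1 : ex_series (fun k => aco gamma k * 1 ^ k)).
  { assert (E := CV_radius_inside (aco gamma) 1 (in_radius gamma 1 H ltac:(lra))).
    revert E; apply ex_series_ext; intros n; rewrite pow_n_pow; unfold scal; simpl; unfold mult; simpl; ring. }
  assert (Eq : ex_series (fun k => aco gamma k * q ^ k)).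
  { assert (E := CV_radius_inside (aco gamma) q (in_radius gamma q H ltac:(lra))).
    revert E; apply ex_series_ext; intros n; rewrite pow_n_pow; unfold scal; simpl; unfold mult; simpl; ring. }
  rewrite <- Series_minus by assumption.
  apply Rlt_le_trans with (aco gamma p0 * 1 ^ p0 - aco gamma p0 * q ^ p0).
  - unfold aco. replace (2 <=? p0)%nat with true by (symmetry; apply Nat.leb_le; lia).
    rewrite pow1. assert (q ^ p0 < 1). { apply pow_lt_1_compat; [lra|lia]. }
    assert (0 < gamma p0 ^ 2) by (apply Rsqr_pos_lt in Hg; unfold Rsqr in Hg; simpl; nra).
    nra.
  - apply (Series_ge_term (fun n => aco gamma n * 1 ^ n - aco gamma n * q ^ n)).
    + intros n. rewrite pow1. assert (q ^ n <= 1) by (rewrite <- (pow1 n); apply pow_incr; lra).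
      assert (0 <= aco gamma n) by apply aco_nonneg. nra.
    + apply ex_series_ext with (fun n => minus (aco gamma n * 1 ^ n) (aco gamma n * q ^ n)).
      intros; reflexivity.
      apply (ex_series_minus (V := R_NormedModule)); assumption.
Qed.

Definition mono01 (z : R -> R) : Prop :=
  (forall t, 0 <= t <= 1 -> 0 <= z t <= 1) /\
  (forall s t, 0 <= s -> s <= t -> t <= 1 -> z s <= z t).

Lemma RInt_split (f : R -> R) a b c : ex_RInt f a b -> ex_RInt f b c ->
  RInt f a c = RInt f a b + RInt f b c.
Proof. intros H1 H2. rewrite <- (RInt_Chasles f a b c H1 H2). reflexivity. Qed.

Lemma RInt_cst (a b v : R) : RInt (fun _ => v) a b = (b - a) * v.
Proof. rewrite RInt_const. reflexivity. Qed.

Lemma z_int z a b : mono01 z -> 0 <= a -> a <= b -> b <= 1 -> ex_RInt z a b.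
Proof.
  intros [_ Hm] Ha Hab Hb. apply ex_RInt_mono; auto. intros; apply Hm; lra.
Qed.

Lemma Fz_int (F z : R -> R) a b : mono01 z ->
  (forall t, 0 <= t <= 1 -> 0 <= F t) ->
  (forall s t, 0 <= s -> s <= t -> t <= 1 -> F s <= F t) ->
  0 <= a -> a <= b -> b <= 1 -> ex_RInt (fun t => F t * z t) a b.
Proof.
  intros [Hr Hm] HF0 HFm Ha Hab Hb. apply ex_RInt_mono; auto. intros s t H1 H2 H3.
  assert (0 <= F s) by (apply HF0; lra). assert (0 <= z s) by (apply Hr; lra).
  apply Rmult_le_compat; auto; [apply HFm|apply Hm]; lra.
Qed.

Lemma xhat_split z s t : mono01 z -> 0 <= s -> s <= t -> t <= 1 ->
  xhat z s = RInt z s t + xhat z t.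
Proof.
  intros Hz Hs Hst Ht. unfold xhat. apply RInt_split; apply z_int; auto; lra.
Qed.

Lemma xhat_lb z Q t : mono01 z -> 0 <= Q < 1 -> z Q = 1 -> 0 <= t <= Q ->
  1 - Q <= xhat z t.
Proof.
  intros Hz HQ HzQ Ht. rewrite (xhat_split z t Q) by (auto; lra).
  assert (0 <= RInt z t Q).
  { apply RInt_ge_0. lra. apply z_int; auto; lra. intros; apply (proj1 Hz); lra. }
  assert (1 - Q <= xhat z Q).
  { unfold xhat. assert (E := RInt_cst Q 1 1).
    replace (1 - Q) with ((1 - Q) * 1) by ring. rewrite <- E. apply RInt_le. lra. apply ex_RInt_const. apply z_int; auto; lra.
    intros x Hx. rewrite <- HzQ. apply (proj2 Hz); lra. }
  lra.
Qed.

Lemma invxhat_int z Q a b : mono01 z -> 0 <= Q < 1 -> z Q = 1 -> 0 <= a -> a <= b -> b <= Q ->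
  ex_RInt (fun t => / xhat z t) a b.
Proof.
  intros Hz HQ HzQ Ha Hab Hb. apply ex_RInt_mono; auto. intros s t H1 H2 H3.
  assert (1 - Q <= xhat z t) by (apply (xhat_lb z Q); auto; lra).
  rewrite (xhat_split z s t) by (auto; lra).
  assert (0 <= RInt z s t).
  { apply RInt_ge_0. lra. apply z_int; auto; lra. intros; apply (proj1 Hz); lra. }
  apply Rinv_le_contravar; lra.
Qed.

Lemma distr_mono01 z : distr_fun01 z -> mono01 z.
Proof. intros [H1 [H2 _]]. split; assumption. Qed.

Lemma core gamma h beta x q r :
  ex_series (fun p => 2 ^ p * (gamma p) ^ 2) -> 0 < beta ->
  is_minimizer gamma h beta x -> 0 <= q -> q < r -> r < 1 ->
  (x q) ^ 2 * beta ^ 2 * (xi gamma r - xi gamma q) * (1 - r) <= 1.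
Proof.
  intros Hs Hb [[Hd [qx [Hqx1 Hqx2]]] Hall] Hq Hqr Hr.
  assert (Hz := distr_mono01 x Hd).
  destruct Hd as [Hrng [Hmon Hrc]].
  set (m := x q).
  assert (Hm : 0 <= m <= 1) by (apply Hrng; lra).
  destruct (Req_dec m 0) as [Hm0|Hm0].
  { rewrite Hm0. assert (0 <= 1) by lra. replace (0 ^ 2) with 0 by ring. lra. }
  assert (Hmp : 0 < m) by lra.
  set (Q := Rmax qx r).
  assert (HQ : 0 <= Q < 1) by (unfold Q; split; [apply Rle_trans with r; [lra|apply Rmax_r]|apply Rmax_lub_lt; lra]).
  assert (HrQ : r <= Q) by apply Rmax_r.
  assert (HxQ : x Q = 1).
  { apply Rle_antisym. apply Hrng; lra. rewrite <- Hqx2. apply Hmon; try lra. apply Rmax_l. }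
  set (y := fun s => if Rlt_dec s r then 0 else x s).
  assert (Hyr : forall s, s < r -> y s = 0).
  { intros s Hs'. unfold y. destruct (Rlt_dec s r); [reflexivity|lra]. }
  assert (Hyx : forall s, r <= s -> y s = x s).
  { intros s Hs'. unfold y. destruct (Rlt_dec s r); [lra|reflexivity]. }
  assert (HyQ : y Q = 1) by (rewrite Hyx; auto).
  assert (HyM : inM y).
  { split.
    - split; [|split].
      + intros t Ht. destruct (Rlt_dec t r) as [H|H]; [rewrite Hyr; auto; lra|rewrite Hyx; [apply Hrng; lra|lra]].
      + intros s t Hs0 Hst Ht1. destruct (Rlt_dec s r) as [H|H].
        * rewrite (Hyr s H). destruct (Rlt_dec t r) as [H'|H']; [rewrite Hyr; auto; lra|rewrite Hyx; [apply Hrng; lra|lra]].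
        * rewrite !Hyx by lra. apply Hmon; lra.
      + intros t Ht eps Heps. destruct (Rlt_dec t r) as [H|H].
        * exists (r - t). split; [lra|]. intros u Hu. rewrite !Hyr by lra.
          rewrite Rminus_0_r, Rabs_R0. exact Heps.
        * destruct (Hrc t Ht eps Heps) as [dl [Hdl Hdl2]]. exists dl. split; [exact Hdl|].
          intros u Hu. rewrite !Hyx by lra. apply Hdl2; exact Hu.
    - exists Q. split; assumption. }
  assert (Hy := distr_mono01 y (proj1 HyM)).
  assert (Hle := Hall y HyM Q Q (conj HQ HxQ) (conj HQ HyQ)).
  unfold Qbeta in Hle.
  set (F := fun t => beta ^ 2 * xid gamma t + (beta * h) ^ 2).
  assert (HF0 : forall t, 0 <= t <= 1 -> 0 <= F t).
  { intros t Ht. unfold F. assert (0 <= xid gamma t) by (apply (xid_mono gamma t t); auto; lra).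
    assert (0 <= beta ^ 2) by apply pow2_ge_0. assert (0 <= (beta*h) ^ 2) by apply pow2_ge_0. nra. }
  assert (HFm : forall s t, 0 <= s -> s <= t -> t <= 1 -> F s <= F t).
  { intros s t H1 H2 H3. unfold F. assert (xid gamma s <= xid gamma t) by (apply (xid_mono gamma s t); auto).
    assert (0 <= beta ^ 2) by apply pow2_ge_0. nra. }
  assert (HD : forall z, RInt (fun q0 => (Derive (xi_beta gamma beta) q0 + (beta * h) ^ 2) * z q0) 0 1
                       = RInt (fun t => F t * z t) 0 1).
  { intros z. apply RInt_ext. intros t Ht. rewrite Rmin_left in Ht by lra. rewrite Rmax_right in Ht by lra.
    f_equal. unfold F. f_equal. apply is_derive_unique. unfold xi_beta.
    apply is_derive_scal. apply xi_derive; auto; lra. }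
  rewrite !HD in Hle.
  assert (I1 : RInt (fun t => F t * x t) 0 1 = RInt (fun t => F t * x t) 0 r + RInt (fun t => F t * x t) r 1).
  { apply RInt_split; apply Fz_int; auto; lra. }
  assert (I2 : RInt (fun t => F t * y t) 0 1 = RInt (fun t => F t * x t) r 1).
  { rewrite (RInt_split _ 0 r 1) by (apply Fz_int; auto; lra).
    assert (E1 : RInt (fun t => F t * y t) 0 r = 0).
    { rewrite (RInt_ext _ (fun _ => 0)). rewrite RInt_cst; apply Rmult_0_r.
      intros t Ht. rewrite Rmin_left in Ht by lra. rewrite Rmax_right in Ht by lra.
      rewrite Hyr by lra. apply Rmult_0_r. }
    assert (E2 : RInt (fun t => F t * y t) r 1 = RInt (fun t => F t * x t) r 1).
    { apply RInt_ext. intros t Ht. rewrite Rmin_left in Ht by lra. rewrite Rmax_right in Ht by lra.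
      rewrite Hyx by lra. reflexivity. }
    rewrite E1, E2. apply Rplus_0_l. }
  set (A := RInt x r 1).
  assert (HA : m * (1 - r) <= A).
  { unfold A. assert (E := RInt_cst r 1 m). replace (m * (1 - r)) with ((1 - r) * m) by ring.
    rewrite <- E. apply RInt_le. lra. apply ex_RInt_const. apply z_int; auto; lra.
    intros t Ht. apply Hmon; lra. }
  assert (HAp : 0 < A) by (assert (0 < m * (1 - r)) by (apply Rmult_lt_0_compat; lra); lra).
  assert (J1 : RInt (fun t => / xhat x t) r Q <= RInt (fun t => / xhat x t) 0 Q).
  { rewrite (RInt_split _ 0 r Q) by (apply (invxhat_int x Q); auto; lra).
    assert (0 <= RInt (fun t => / xhat x t) 0 r); [|lra].
    apply RInt_ge_0. lra. apply (invxhat_int x Q); auto; lra.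
    intros t Ht. apply Rlt_le, Rinv_0_lt_compat. assert (1 - Q <= xhat x t) by (apply (xhat_lb x Q); auto; lra). lra. }
  assert (J2 : RInt (fun t => / xhat y t) 0 Q = r * / A + RInt (fun t => / xhat x t) r Q).
  { rewrite (RInt_split _ 0 r Q) by (apply (invxhat_int y Q); auto; lra).
    f_equal.
    - rewrite (RInt_ext _ (fun _ => / A)). rewrite RInt_cst, Rminus_0_r; reflexivity.
      intros t Ht. rewrite Rmin_left in Ht by lra. rewrite Rmax_right in Ht by lra.
      f_equal. rewrite (xhat_split y t r) by (auto; lra).
      assert (E1 : RInt y t r = 0).
      { rewrite (RInt_ext _ (fun _ => 0)). rewrite RInt_cst; apply Rmult_0_r.
        intros u Hu. rewrite Rmin_left in Hu by lra. rewrite Rmax_right in Hu by lra. apply Hyr; lra. }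
      assert (E2 : xhat y r = A).
      { unfold xhat, A. apply RInt_ext. intros u Hu. rewrite Rmin_left in Hu by lra. rewrite Rmax_right in Hu by lra.
        apply Hyx; lra. }
      rewrite E1, E2; ring.
    - apply RInt_ext. intros t Ht. rewrite Rmin_left in Ht by lra. rewrite Rmax_right in Ht by lra.
      f_equal. unfold xhat. apply RInt_ext. intros u Hu. rewrite Rmin_left in Hu by lra. rewrite Rmax_right in Hu by lra.
      apply Hyx; lra. }
  assert (HP : RInt (fun t => F t * x t) 0 r <= r * / A) by lra.
  assert (HG : is_RInt (xid gamma) q r (xi gamma r - xi gamma q)) by (apply xi_ftc; auto; lra).
  set (G := xi gamma r - xi gamma q) in *.
  assert (HG0 : 0 <= G).
  { rewrite <- (is_RInt_unique _ _ _ _ HG). apply RInt_ge_0. lra. exists G; exact HG.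
    intros t Ht; apply (xid_mono gamma t t); auto; lra. }
  assert (HmF : is_RInt (fun t => m * F t) q r (m * (beta ^ 2 * G + (beta * h) ^ 2 * (r - q)))).
  { apply (is_RInt_ext (V := R_NormedModule) (fun t => scal m (plus (scal (beta ^ 2) (xid gamma t)) ((beta * h) ^ 2)))).
    intros; reflexivity.
    replace (m * (beta ^ 2 * G + (beta * h) ^ 2 * (r - q))) with
      (scal m (plus (scal (beta ^ 2) G) (scal (r - q) ((beta * h) ^ 2)))).
    2: { unfold scal, plus; simpl; unfold mult; simpl. ring. }
    apply (is_RInt_scal (V := R_NormedModule)), (is_RInt_plus (V := R_NormedModule)). apply (is_RInt_scal (V := R_NormedModule)), HG. apply (is_RInt_const (V := R_NormedModule)). }
  assert (HP2 : m * (beta ^ 2 * G + (beta * h) ^ 2 * (r - q)) <= RInt (fun t => F t * x t) 0 r).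
  { rewrite (RInt_split _ 0 q r) by (apply Fz_int; auto; lra).
    assert (0 <= RInt (fun t => F t * x t) 0 q).
    { apply RInt_ge_0. lra. apply Fz_int; auto; lra. intros t Ht.
      apply Rmult_le_pos. apply HF0; lra. apply Hrng; lra. }
    rewrite <- (is_RInt_unique _ _ _ _ HmF).
    assert (RInt (fun t => m * F t) q r <= RInt (fun t => F t * x t) q r); [|lra].
    apply RInt_le. lra. exists (m * (beta ^ 2 * G + (beta * h) ^ 2 * (r - q))); exact HmF.
    apply Fz_int; auto; lra.
    intros t Ht. rewrite Rmult_comm. apply Rmult_le_compat_l. apply HF0; lra. apply Hmon; lra. }
  assert (Hhq : 0 <= (beta * h) ^ 2 * (r - q)) by (apply Rmult_le_pos; [apply pow2_ge_0|lra]).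
  assert (Hb2 : 0 <= beta ^ 2) by apply pow2_ge_0.
  assert (K1 : m * beta ^ 2 * G <= r * / A) by nra.
  assert (K2 : m * beta ^ 2 * G * A <= r).
  { assert (E : r * / A * A = r) by (field; lra). apply Rmult_le_compat_r with (r := A) in K1; [|lra]. rewrite E in K1. exact K1. }
  assert (K3 : 0 <= m * beta ^ 2 * G) by (apply Rmult_le_pos; [apply Rmult_le_pos|]; lra).
  assert (K4 : m * beta ^ 2 * G * (m * (1 - r)) <= m * beta ^ 2 * G * A) by (apply Rmult_le_compat_l; lra).
  replace (m ^ 2 * beta ^ 2 * G * (1 - r)) with (m * beta ^ 2 * G * (m * (1 - r))) by ring.
  lra.
Qed.

Theorem lemma1 :
  forall gamma : nat -> R,
    ex_series (fun p => 2 ^ p * (gamma p) ^ 2) ->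
    (exists p, (2 <= p)%nat /\ gamma p <> 0) ->
    exists C : R, 0 < C /\
      forall (h beta : R), 0 < beta ->
        forall x : R -> R, is_minimizer gamma h beta x ->
          forall q, 0 <= q < 1 ->
            beta * x q <= C / (xi gamma 1 - xi gamma q).
Proof.
  intros gamma Hs Hp.
  assert (Hx1 : 0 <= xid gamma 1) by (apply (xid_mono gamma 1 1); auto; lra).
  set (K := xid gamma 1 + 1).
  exists (2 * K). split; [unfold K; lra|].
  intros h beta Hb x Hmin q Hq.
  assert (HD := xi_gap gamma q Hs Hp Hq).
  set (D := xi gamma 1 - xi gamma q) in *.
  assert (HDl : D <= xid gamma 1 * (1 - q)) by (apply xi_lip; auto; lra).
  set (r := 1 - D / (2 * K)).
  assert (HK : 1 <= K) by (unfold K; lra).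
  assert (Hr1 : D / (2 * K) * (2 * K) = D) by (field; lra).
  assert (Hrpos : 0 < D / (2 * K)) by (apply Rdiv_lt_0_compat; lra).
  assert (Hqr : q < r).
  { unfold r. assert (D / (2 * K) < 1 - q); [|lra].
    apply Rmult_lt_reg_r with (2 * K). lra. rewrite Hr1. unfold K. nra. }
  assert (Hr : r < 1) by (unfold r; lra).
  assert (Hcore := core gamma h beta x q r Hs Hb Hmin (proj1 Hq) Hqr Hr).
  assert (H1r : xi gamma 1 - xi gamma r <= xid gamma 1 * (1 - r)) by (apply xi_lip; [exact Hs|lra|lra|lra]).
  assert (HG : D / 2 <= xi gamma r - xi gamma q).
  { assert (xid gamma 1 * (1 - r) <= D / 2); [|unfold D in *; lra].
    unfold r. replace (1 - (1 - D / (2 * K))) with (D / (2 * K)) by ring.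
    apply Rmult_le_reg_r with (2 * K). lra.
    replace (xid gamma 1 * (D / (2 * K)) * (2 * K)) with (xid gamma 1 * (D / (2 * K) * (2 * K))) by ring.
    rewrite Hr1. unfold K. nra. }
  destruct Hmin as [[[Hrng _] _] _].
  assert (Hm : 0 <= x q <= 1) by (apply Hrng; lra).
  set (m := x q) in *.
  set (u := beta * m * D).
  assert (Hu0 : 0 <= u) by (unfold u; apply Rmult_le_pos; [apply Rmult_le_pos|]; lra).
  assert (Hu2 : u * u <= 4 * K).
  { assert (E1 : 1 - r = D / (2 * K)) by (unfold r; ring).
    rewrite E1 in Hcore.
    assert (Hm2 : 0 <= m ^ 2 * beta ^ 2) by (apply Rmult_le_pos; apply pow2_ge_0).
    assert (S1 : m ^ 2 * beta ^ 2 * (D / 2) * (D / (2 * K)) <= 1).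
    { apply Rle_trans with (2 := Hcore). apply Rmult_le_compat_r; [lra|].
      apply Rmult_le_compat_l; lra. }
    assert (S2 : m ^ 2 * beta ^ 2 * (D / 2) * (D / (2 * K)) * (4 * K) = u * u).
    { unfold u. field. lra. }
    rewrite <- S2. assert (0 <= 4 * K) by lra. nra. }
  assert (Hu : u <= 2 * K) by nra.
  unfold Rdiv. apply Rmult_le_reg_r with D. lra.
  replace (2 * K * / D * D) with (2 * K) by (field; lra). unfold u in Hu. lra.
Qed.
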